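(* Let $a_1,a_2\in\mathbb{R}$ and $C>0$, and let $$R=\begin{pmatrix} 1 & a_1 \\ a_2 & 1 \end{pmatrix},\qquad S=\begin{pmatrix} 1 & Ca_1 \\ a_2/C & 1 \end{pmatrix}.$$ Then the Skorokhod problem with matrix $R$ has a unique solution for every driving function if and only if the Skorokhod problem with matrix $S$ has a unique solution for every driving function.
   Context: For $b=(b_1,b_2)\in\mathbb{R}^2$ write $b\ge 0$ if $b_1\ge 0$ and $b_2\ge 0$, and let $D=\{b\in\mathbb{R}^2: b\ge 0\}$. A driving function is a continuous function $f:[0,\infty)\to\mathbb{R}^2$ with $f(0)\ge 0$. Given a real $2\times 2$ matrix $R$ and a driving function $f$, a solution of the Skorokhod problem is a pair $(g,m)$ where (1) $g:[0,\infty)\to D$ is continuous; (2) $m=(m_1,m_2):[0,\infty)\to\mathbb{R}^2$ is continuous with $m(0)=0$ and each $m_j$ non-decreasing; (3) $g(t)=f(t)+Rm(t)$ for all $t\ge 0$; and (4) for $j=1,2$, $m_j$ increases only when $g_j=0$, i.e. $\int_0^\infty g_j(t)\,dm_j(t)=0$. ''Unique solution'' means there is exactly one such pair $(g,m)$. *)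

(* Defs.v *)
From Stdlib Require Import Reals.
Open Scope R_scope.

Record mat2 := Mat2 { r11 : R; r12 : R; r21 : R; r22 : R }.

Definition mulv (M : mat2) (v : R * R) : R * R :=
  (r11 M * fst v + r12 M * snd v, r21 M * fst v + r22 M * snd v).

Definition addv (u v : R * R) : R * R := (fst u + fst v, snd u + snd v).

Definition nonneg2 (b : R * R) : Prop := 0 <= fst b /\ 0 <= snd b.

Definition cont0 (h : R -> R) : Prop :=
  forall t, 0 <= t -> forall eps, 0 < eps -> exists delta, 0 < delta /\
    forall s, 0 <= s -> Rabs (s - t) < delta -> Rabs (h s - h t) < eps.

Definition cont2 (h : R -> R * R) : Prop :=
  cont0 (fun t => fst (h t)) /\ cont0 (fun t => snd (h t)).

Definition nondecr0 (h : R -> R) : Prop :=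
  forall s t, 0 <= s -> s <= t -> h s <= h t.

Definition incr_only_at_zero (h k : R -> R) : Prop :=
  forall s t, 0 <= s -> s <= t -> (forall u, s <= u <= t -> 0 < k u) -> h s = h t.

Definition driving (f : R -> R * R) : Prop := cont2 f /\ nonneg2 (f 0).

(* (g, m) solves the Skorokhod problem for matrix M and driving function f;
   all functions are only considered on [0, +oo). *)
Definition SP_solution (M : mat2) (f g m : R -> R * R) : Prop :=
  cont2 g /\ (forall t, 0 <= t -> nonneg2 (g t)) /\
  cont2 m /\ m 0 = (0, 0) /\
  nondecr0 (fun t => fst (m t)) /\ nondecr0 (fun t => snd (m t)) /\
  (forall t, 0 <= t -> g t = addv (f t) (mulv M (m t))) /\
  incr_only_at_zero (fun t => fst (m t)) (fun t => fst (g t)) /\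
  incr_only_at_zero (fun t => snd (m t)) (fun t => snd (g t)).

Definition SP_unique (M : mat2) (f : R -> R * R) : Prop :=
  (exists g m, SP_solution M f g m) /\
  (forall g m g' m', SP_solution M f g m -> SP_solution M f g' m' ->
     forall t, 0 <= t -> g t = g' t /\ m t = m' t).

(* Main.v *)
Require Import Defs.
From Stdlib Require Import Reals Lra FunctionalExtensionality.
Open Scope R_scope.

Definition scl (c : R) (v : R * R) : R * R := (c * fst v, snd v).

Lemma cont0_scale c h : 0 < c -> cont0 h -> cont0 (fun t => c * h t).
Proof.
  intros Hc H t Ht eps He.
  destruct (H t Ht (eps / c)) as [d [Hd Hs]].
  { apply Rdiv_lt_0_compat; lra. }
  exists d; split; auto. intros s Hs0 Hsd.
  specialize (Hs s Hs0 Hsd).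
  replace (c * h s - c * h t) with (c * (h s - h t)) by ring.
  rewrite Rabs_mult, (Rabs_right c) by lra.
  apply Rmult_lt_reg_r with (/ c). apply Rinv_0_lt_compat; lra.
  replace (c * Rabs (h s - h t) * / c) with (Rabs (h s - h t)) by (field; lra).
  exact Hs.
Qed.

Lemma transfer (M M' : mat2) (c : R) (f f' g m : R -> R * R) :
  0 < c -> r11 M' = r11 M -> r12 M' = c * r12 M -> r21 M' = r21 M / c ->
  r22 M' = r22 M -> (forall t, 0 <= t -> f' t = scl c (f t)) ->
  SP_solution M f g m ->
  SP_solution M' f' (fun t => scl c (g t)) (fun t => scl c (m t)).
Proof.
  intros Hc E11 E12 E21 E22 Hf
    [[Hg1 Hg2] [Hgn [[Hm1 Hm2] [Hm0 [Hnd1 [Hnd2 [Heq [Hi1 Hi2]]]]]]]].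
  unfold scl; simpl.
  repeat split.
  - apply cont0_scale; auto.
  - exact Hg2.
  - match goal with h : 0 <= ?t |- _ => destruct (Hgn t h) as [A B] end; simpl; apply Rmult_le_pos; lra.
  - match goal with h : 0 <= ?t |- _ => destruct (Hgn t h) as [A B] end; simpl; lra.
  - apply cont0_scale; auto.
  - exact Hm2.
  - rewrite Hm0; simpl; f_equal; ring.
  - intros s t Hs Hst; simpl; apply Rmult_le_compat_l; [lra| apply Hnd1; auto].
  - exact Hnd2.
  - intros t Ht. rewrite (Hf t Ht), (Heq t Ht).
    unfold addv, mulv, scl; simpl.
    rewrite E11, E12, E21, E22.
    f_equal; field; lra.
  - intros s t Hs Hst Hu; simpl. f_equal. apply Hi1; auto.
    intros u Hu'. specialize (Hu u Hu'). simpl in Hu.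
    apply Rmult_lt_reg_l with c; lra.
  - exact Hi2.
Qed.

Lemma unique_transfer (M M' : mat2) (c : R) (f f' : R -> R * R) :
  0 < c -> r11 M' = r11 M -> r12 M' = c * r12 M -> r21 M' = r21 M / c ->
  r22 M' = r22 M -> (forall t, 0 <= t -> f' t = scl c (f t)) ->
  SP_unique M f -> SP_unique M' f'.
Proof.
  intros Hc E11 E12 E21 E22 Hf [[g [m Hs]] Hu].
  split.
  - exists (fun t => scl c (g t)), (fun t => scl c (m t)).
    eapply transfer; eauto.
  - intros g1 m1 g2 m2 H1 H2 t Ht.
    assert (Hc' : 0 < / c) by (apply Rinv_0_lt_compat; lra).
    assert (Hf' : forall t, 0 <= t -> f t = scl (/ c) (f' t)).
    { intros u Hu0; rewrite (Hf u Hu0); unfold scl; simpl.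
      destruct (f u); simpl; f_equal; field; lra. }
    assert (K1 := transfer M' M (/ c) f' f g1 m1 Hc' (eq_sym E11)
      ltac:(rewrite E12; field; lra) ltac:(rewrite E21; field; lra)
      (eq_sym E22) Hf' H1).
    assert (K2 := transfer M' M (/ c) f' f g2 m2 Hc' (eq_sym E11)
      ltac:(rewrite E12; field; lra) ltac:(rewrite E21; field; lra)
      (eq_sym E22) Hf' H2).
    destruct (Hu _ _ _ _ K1 K2 t Ht) as [A B].
    unfold scl in A, B.
    destruct (g1 t) as [x1 y1], (g2 t) as [x2 y2], (m1 t) as [p1 q1], (m2 t) as [p2 q2].
    simpl in *. injection A; injection B; intros.
    assert (x1 = x2) by (apply Rmult_eq_reg_l with (/ c); lra).
    assert (p1 = p2) by (apply Rmult_eq_reg_l with (/ c); lra).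
    subst; split; reflexivity.
Qed.

Lemma driving_scale c f f' : 0 < c -> (forall t, f' t = scl c (f t)) ->
  driving f -> driving f'.
Proof.
  intros Hc Hf [[H1 H2] [A B]].
  assert (E : f' = fun t => scl c (f t)) by (apply functional_extensionality; auto).
  subst f'. unfold scl; repeat split; simpl.
  - apply cont0_scale; auto.
  - exact H2.
  - apply Rmult_le_pos; lra.
  - exact B.
Qed.

Theorem lemma3p1 (a1 a2 C : R) (hC : 0 < C) :
  (forall f : R -> R * R, driving f -> SP_unique (Mat2 1 a1 a2 1) f) <->
  (forall f : R -> R * R, driving f -> SP_unique (Mat2 1 (C * a1) (a2 / C) 1) f).
Proof.
  assert (hC' : 0 < / C) by (apply Rinv_0_lt_compat; lra).
  split; intros H f Hd.
  - apply (unique_transfer (Mat2 1 a1 a2 1) _ C (fun t => scl (/ C) (f t)));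
      simpl; auto.
    + intros t _; unfold scl; simpl; destruct (f t); simpl; f_equal; field; lra.
    + apply H. apply (driving_scale (/ C) f); auto.
  - apply (unique_transfer (Mat2 1 (C * a1) (a2 / C) 1) _ (/ C)
      (fun t => scl C (f t))); simpl; auto.
    + field; lra.
    + field; lra.
    + intros t _; unfold scl; simpl; destruct (f t); simpl; f_equal; field; lra.
    + apply H. apply (driving_scale C f); auto.
Qed.
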